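(* Let $R$ be an abelian Rickart $*$-ring and $a_1,a_2,b_1,b_2\in R$ with $a_1\perp a_2$, $b_1\perp b_2$, $a_1\sim b_1$ and $a_2\sim b_2$. Then $a_1+a_2\sim b_1+b_2$.
   Context: A Rickart $*$-ring is a $*$-ring in which the right annihilator of every element is generated as a right ideal by a projection ($e=e^2=e^*$); it has unity. Abelian: all idempotents central. Orthogonality: $a\perp b$ iff there is $x\in R$ with $xa=a=ax^*$ and $xb=0=bx^*$. Equivalence: $a\sim b$ iff there exist $x,y\in R$ with $aa^*=xx^*$, $bb^*=yy^*$, $a^*a=y^*y$, $b^*b=x^*x$, $x=ax=xb$, $y=by=ya$. *)

(* Defs.v *)
From mathcomp Require Import all_boot all_algebra.
Set Implicit Arguments. Unset Strict Implicit. Unset Printing Implicit Defensive.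
Import GRing.Theory.
Local Open Scope ring_scope.

Definition is_involution (R : pzRingType) (star : R -> R) : Prop :=
  [/\ forall x y, star (x + y) = star x + star y,
      forall x y, star (x * y) = star y * star x
    & forall x, star (star x) = x].

Definition is_projection (R : pzRingType) (star : R -> R) (e : R) : Prop :=
  e * e = e /\ star e = e.

Definition rickart (R : pzRingType) (star : R -> R) : Prop :=
  forall x : R, exists e : R, is_projection star e /\
    (forall y : R, x * y = 0 <-> exists z : R, y = e * z).

Definition abelian_ring (R : pzRingType) : Prop :=
  forall e : R, e * e = e -> forall r : R, e * r = r * e.

Definition orth (R : pzRingType) (star : R -> R) (a b : R) : Prop :=
  exists x : R, [/\ x * a = a, a * star x = a, x * b = 0 & b * star x = 0].

Definition equiv_star (R : pzRingType) (star : R -> R) (a b : R) : Prop :=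
  exists x y : R,
    a * star a = x * star x /\ b * star b = y * star y /\
    star a * a = star y * y /\ star b * b = star x * x /\
    x = a * x /\ x = x * b /\ y = b * y /\ y = y * a.

(* Main.v *)
Require Import Defs.
From mathcomp Require Import all_boot all_algebra.
Local Open Scope ring_scope.
Import GRing.Theory.

Lemma star0 (R : pzRingType) (star : R -> R) : is_involution star -> star 0 = 0.
Proof.
case=> sD _ _. have := sD 0 0; rewrite addr0 => h.
by apply: (addrI (star 0)); rewrite addr0 -h.
Qed.

Lemma orth_prods (R : pzRingType) (star : R -> R)
  (Hstar : is_involution star) (Hrick : rickart star) (Hab : abelian_ring R)
  (a1 a2 : R) : orth star a1 a2 ->
  a1 * a2 = 0 /\ a2 * a1 = 0 /\ star a1 * a2 = 0 /\ star a2 * a1 = 0 /\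
      a1 * star a2 = 0 /\ a2 * star a1 = 0.
Proof.
move=> [u [ua1 a1u ua2 a2u]].
have s0 := @star0 R star Hstar.
case: Hstar => sD sM sK.
have [e [[ee se] He]] := Hrick u.
have [z hz] := (proj1 (He a2)) ua2.
have ea2 : e * a2 = a2 by rewrite hz mulrA ee.
have ue : u * e = 0 by apply/(proj2 (He e)); exists 1; rewrite mulr1.
have eu : e * u = 0 by rewrite (Hab e ee) ue.
have ea1 : e * a1 = 0 by rewrite -ua1 mulrA eu mul0r.
have a2e : a2 * e = a2 by rewrite -Hab.
have sa2e : star a2 * e = star a2 by rewrite -{1}se -sM ea2.
have sa1e : star a1 * e = 0 by rewrite -{1}se -sM ea1.
split; [|split; [|split; [|split; [|split]]]].
- by rewrite -ea2 mulrA -(Hab e ee) ea1 mul0r.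
- by rewrite -a2e -mulrA ea1 mulr0.
- by rewrite -ea2 mulrA sa1e mul0r.
- by rewrite -sa2e -mulrA ea1 mulr0.
- by rewrite -sa2e -(Hab e ee (star a2)) mulrA -(Hab e ee a1) ea1 mul0r.
- by rewrite -a2e -mulrA (Hab e ee (star a1)) sa1e mulr0.
Qed.

Theorem mainTheorem14 (R : pzRingType) (star : R -> R)
  (Hstar : is_involution star) (Hrick : rickart star) (Hab : abelian_ring R)
  (a1 a2 b1 b2 : R)
  (Ha : orth star a1 a2) (Hb : orth star b1 b2)
  (H1 : equiv_star star a1 b1) (H2 : equiv_star star a2 b2) :
  equiv_star star (a1 + a2) (b1 + b2).
Proof.
have [A1 [A2 [A3 [A4 [A5 A6]]]]] := @orth_prods R star Hstar Hrick Hab a1 a2 Ha.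
have [B1 [B2 [B3 [B4 [B5 B6]]]]] := @orth_prods R star Hstar Hrick Hab b1 b2 Hb.
case: Hstar => sD sM sK.
case: H1 => x1 [y1 [e1 [e2 [e3 [e4 [xa1 [xb1 [yb1 ya1]]]]]]]].
case: H2 => x2 [y2 [f1 [f2 [f3 [f4 [xa2 [xb2 [yb2 ya2]]]]]]]].
exists (x1 + x2), (y1 + y2).
rewrite !sD !mulrDl !mulrDr.
have X1 : x1 * star x2 = 0 by rewrite xb1 xb2 sM -!mulrA (mulrA b1) B5 mul0r mulr0.
have X2 : x2 * star x1 = 0 by rewrite xb1 xb2 sM -!mulrA (mulrA b2) B6 mul0r mulr0.
have Y1 : y1 * star y2 = 0 by rewrite ya1 ya2 sM -!mulrA (mulrA a1) A5 mul0r mulr0.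
have Y2 : y2 * star y1 = 0 by rewrite ya1 ya2 sM -!mulrA (mulrA a2) A6 mul0r mulr0.
have Y3 : star y1 * y2 = 0 by rewrite yb1 yb2 sM -!mulrA (mulrA (star b1)) B3 mul0r mulr0.
have Y4 : star y2 * y1 = 0 by rewrite yb1 yb2 sM -!mulrA (mulrA (star b2)) B4 mul0r mulr0.
have X3 : star x1 * x2 = 0 by rewrite xa1 xa2 sM -!mulrA (mulrA (star a1)) A3 mul0r mulr0.
have X4 : star x2 * x1 = 0 by rewrite xa1 xa2 sM -!mulrA (mulrA (star a2)) A4 mul0r mulr0.
have P1 : a1 * x2 = 0 by rewrite xa2 mulrA A1 mul0r.
have P2 : a2 * x1 = 0 by rewrite xa1 mulrA A2 mul0r.
have P3 : x1 * b2 = 0 by rewrite xb1 -mulrA B1 mulr0.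
have P4 : x2 * b1 = 0 by rewrite xb2 -mulrA B2 mulr0.
have P5 : b1 * y2 = 0 by rewrite yb2 mulrA B1 mul0r.
have P6 : b2 * y1 = 0 by rewrite yb1 mulrA B2 mul0r.
have P7 : y1 * a2 = 0 by rewrite ya1 -mulrA A1 mulr0.
have P8 : y2 * a1 = 0 by rewrite ya2 -mulrA A2 mulr0.
rewrite X1 X2 Y1 Y2 Y3 Y4 X3 X4 P1 P2 P3 P4 P5 P6 P7 P8 A5 A6 B5 B6 A3 A4 B3 B4.
rewrite !addr0 !add0r -xa1 -xa2 -xb1 -xb2 -yb1 -yb2 -ya1 -ya2 e1 e2 e3 e4 f1 f2 f3 f4.
by do !split.
Qed.
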